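(* Let $n\geq2$. Then there exist matrices $u,v,w\in[M_n(\mathbb{Z}),M_n(\mathbb{Z})]_1$ such that $[u,v]$ is invertible in $M_n(\mathbb{Z})$ and $v=vw$.
   Context: $[x,y]=xy-yx$, and $[M_n(\mathbb{Z}),M_n(\mathbb{Z})]_1=\{[x,y]:x,y\in M_n(\mathbb{Z})\}$ is the set of commutators in the ring of $n\times n$ integer matrices. *)

(* Defs.v *)
From mathcomp Require Import all_boot all_order all_algebra.
Set Implicit Arguments. Unset Strict Implicit. Unset Printing Implicit Defensive.
Import GRing.Theory.
Local Open Scope ring_scope.

Definition mx_comm (n : nat) (x y : 'M[int]_n) : 'M[int]_n := x *m y - y *m x.

(* Membership in [M_n(Z), M_n(Z)]_1 : x is a single commutator. *)
Definition is_commutator (n : nat) (z : 'M[int]_n) : Prop :=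
  exists x y : 'M[int]_n, z = mx_comm x y.

(* Main.v *)
Require Import Defs.
From mathcomp Require Import all_boot all_order all_algebra.
Local Open Scope ring_scope.
Import GRing.Theory.

Definition PP (n : nat) : Prop :=
  exists u v w : 'M[int]_n,
    [/\ is_commutator u, is_commutator v, is_commutator w,
        (mx_comm u v \in unitmx) & v = v *m w].

Definition mkM (k : nat) (l : seq (seq int)) : 'M[int]_k :=
  \matrix_(i < k, j < k) nth 0 (nth [::] l i) j.

Ltac mxcomp :=
  apply/matrixP => [[[|[|[|?]]] ?] [[|[|[|?]]] ?]] //;
  rewrite /mx_comm ?mxE ?big_ord_recr ?big_ord0 /= ?mxE //.

Lemma P2 : PP 2.
Proof.
exists (mkM 2 [:: [:: 0; 0]; [:: 1; 0]]), (mkM 2 [:: [:: 0; 1]; [:: 0; 0]]),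
  (mkM 2 [:: [:: -1; 0]; [:: 0; 1]]); split.
- exists (mkM 2 [:: [:: 0; 0]; [:: 0; 1]]), (mkM 2 [:: [:: 0; 0]; [:: 1; 0]]).
  mxcomp.
- exists (mkM 2 [:: [:: 1; 0]; [:: 0; 0]]), (mkM 2 [:: [:: 0; 1]; [:: 0; 0]]).
  mxcomp.
- exists (mkM 2 [:: [:: 0; 0]; [:: 1; 0]]), (mkM 2 [:: [:: 0; 1]; [:: 0; 0]]).
  mxcomp.
- apply: (proj1 (@mulmx1_unit _ _ _ (mkM 2 [:: [:: -1; 0]; [:: 0; 1]]) _)).
  have -> : mx_comm (mkM 2 [:: [:: 0; 0]; [:: 1; 0]]) (mkM 2 [:: [:: 0; 1]; [:: 0; 0]])
     = mkM 2 [:: [:: -1; 0]; [:: 0; 1]] by mxcomp.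
  mxcomp.
- mxcomp.
Qed.

Lemma P3 : PP 3.
Proof.
exists (mkM 3 [:: [:: 0; 1; 1]; [:: -1; 0; 0]; [:: -1; 0; 0]]),
  (mkM 3 [:: [:: 0; 1; 0]; [:: 0; 0; 1]; [:: 0; 0; 0]]),
  (mkM 3 [:: [:: -2; 0; 0]; [:: 0; 1; 0]; [:: 0; 0; 1]]); split.
- exists (mkM 3 [:: [:: -1; -1; -1]; [:: -1; -1; -1]; [:: -1; -1; -1]]),
    (mkM 3 [:: [:: 1; 0; 0]; [:: 0; 0; 0]; [:: 0; 0; 0]]).
  mxcomp.
- exists (mkM 3 [:: [:: 0; 0; 0]; [:: 0; -1; 0]; [:: 0; 0; -2]]),
    (mkM 3 [:: [:: 0; 1; 0]; [:: 0; 0; 1]; [:: 0; 0; 0]]).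
  mxcomp.
- exists (mkM 3 [:: [:: 0; 1; 0]; [:: 0; 0; 1]; [:: 0; 0; 0]]),
    (mkM 3 [:: [:: 0; 0; 0]; [:: -2; 0; 0]; [:: 0; -1; 0]]).
  mxcomp.
- apply: (proj1 (@mulmx1_unit _ _ _ (mkM 3 [:: [:: 0; 1; -1]; [:: 0; 0; -1]; [:: 1; -1; 1]]) _)).
  have -> : mx_comm (mkM 3 [:: [:: 0; 1; 1]; [:: -1; 0; 0]; [:: -1; 0; 0]])
     (mkM 3 [:: [:: 0; 1; 0]; [:: 0; 0; 1]; [:: 0; 0; 0]])
     = mkM 3 [:: [:: 1; 0; 1]; [:: 1; -1; 0]; [:: 0; -1; 0]] by mxcomp.
  mxcomp.
- mxcomp.
Qed.

Lemma comm_block a b (x1 y1 : 'M[int]_a) (x2 y2 : 'M[int]_b) :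
  mx_comm (block_mx x1 0 0 x2) (block_mx y1 0 0 y2) =
  block_mx (mx_comm x1 y1) 0 0 (mx_comm x2 y2).
Proof.
rewrite /mx_comm !mulmx_block !mul0mx !mulmx0 !addr0 !add0r opp_block_mx add_block_mx.
by rewrite ?oppr0 ?addr0 ?subr0.
Qed.

Lemma comm_blockP a b (z1 : 'M[int]_a) (z2 : 'M[int]_b) :
  is_commutator z1 -> is_commutator z2 -> is_commutator (block_mx z1 0 0 z2).
Proof.
move=> [x1 [y1 ->]] [x2 [y2 ->]].
by exists (block_mx x1 0 0 x2), (block_mx y1 0 0 y2); rewrite comm_block.
Qed.

Lemma PPadd a b : PP a -> PP b -> PP (a + b).
Proof.
move=> [u1 [v1 [w1 [hu1 hv1 hw1 hc1 he1]]]] [u2 [v2 [w2 [hu2 hv2 hw2 hc2 he2]]]].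
exists (block_mx u1 0 0 u2), (block_mx v1 0 0 v2), (block_mx w1 0 0 w2); split.
- exact: comm_blockP.
- exact: comm_blockP.
- exact: comm_blockP.
- by rewrite comm_block unitmxE det_ublock unitrM -!unitmxE hc1 hc2.
- by rewrite mulmx_block !mul0mx !mulmx0 !addr0 !add0r -he1 -he2.
Qed.

Theorem lemma5p14 (n : nat) (hn : (2 <= n)%N) :
  exists u v w : 'M[int]_n,
    [/\ is_commutator u, is_commutator v, is_commutator w,
        (mx_comm u v \in unitmx) & v = v *m w].
Proof.
have H : forall m k, (k <= m)%N -> (2 <= k)%N -> PP k.
  elim=> [|m IH] k hk h2; first by case: k hk h2.
  case: k hk h2 => [|[|[|[|k]]]] //= hk _; first exact: P2; first exact: P3.
  apply: (@PPadd 2 k.+2 P2).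
  apply: IH => //.
  move: hk; rewrite !ltnS => hk.
  exact: leq_trans (leqnSn _) hk.
exact: (H n n (leqnn n) hn).
Qed.
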